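(* Let $m,n\in\mathbb{N}$. Then $K_{n,n}\subseteq K_{m,n}$.
   Context: Thompson's group $F$ is the group of piecewise linear homeomorphisms of $[0,1]$ with finitely many dyadic breakpoints and slopes integer powers of $2$. An element $h\in F$ has the pair of branches $u\rightarrow v$ (for finite binary words $u,v$) if $h(.u\alpha)=.v\alpha$ for every infinite binary word $\alpha$. For $H\le F$ write $u\sim_H v$ if some $h\in H$ has the pair of branches $u\rightarrow v$. The closure $\mathrm{Cl}(H)$ is the subgroup of all $f\in F$ for which there is a finite subdivision of $[0,1]$ into intervals on each of which $f$ coincides with some element of $H$; $H$ is closed if $H=\mathrm{Cl}(H)$ (intersections of closed subgroups are closed). For $m,n\in\mathbb{N}$ let $d=\gcd(m,n)$; $K_{m,n}$ is the minimal closed subgroup $K$ of $F$ such that: (a) $0^k1\sim_K 0^{k+d}1$ for all $k\in\mathbb{N}$; (b) $1^k0\sim_K 1^{k+d}0$ for all $k\in\mathbb{N}$; (c) $0^k1\sim_K 1^{d+1-k}0$ for $1\le k\le d$; (d) $0^{2k}10\sim_K 1^{1+3(n-k)}0$ for $1\le k\le n$; (e) $0^{2k}11\sim_K 1^{2+3(n-k)}0$ for $1\le k\le n$; (f) $0^{2k-1}1\sim_K 1^{3(n-k+1)}0$ for $1\le k\le n$. In particular $K_{n,n}$ is defined with $d=n$. *)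

(* Defs.v *)
From Stdlib Require Import Reals ZArith Arith List.
From Coquelicot Require Import Coquelicot.
Import ListNotations.
Open Scope R_scope.

(* A finite binary word is a [list bool] ([false] = digit 0, [true] = digit 1);
   an infinite binary word is a map [nat -> bool]. *)
Definition word := list bool.

Definition prefix_word (u : word) (alpha : nat -> bool) : nat -> bool :=
  fun i => if Nat.ltb i (length u) then nth i u false else alpha (i - length u)%nat.

Definition binval (w : nat -> bool) : R :=
  Series (fun i => if w i then (/ 2) ^ (S i) else 0).

Definition zeros (k : nat) : word := repeat false k.
Definition ones (k : nat) : word := repeat true k.

Definition dyadic (x : R) : Prop :=
  exists (z : Z) (j : nat), x = IZR z / 2 ^ j.

(* f is (the extension by the identity outside [0,1] of) a piecewise linear
   homeomorphism of [0,1] with finitely many dyadic breakpoints and slopes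
   integer powers of 2.  Continuity is built in (pieces agree on closed
   intervals), positivity of slopes gives monotonicity, f 0 = 0, f 1 = 1. *)
Definition inF (f : R -> R) : Prop :=
  (forall x, (x < 0 \/ 1 < x) -> f x = x) /\
  f 0 = 0 /\ f 1 = 1 /\
  exists (k : nat) (p : nat -> R),
    p 0%nat = 0 /\ p k = 1 /\
    (forall i, (i < k)%nat -> p i < p (S i) /\ dyadic (p i)) /\
    (forall i, (i < k)%nat ->
       exists (a : Z) (b : R), forall x, p i <= x <= p (S i) ->
         f x = powerRZ 2 a * x + b).

Definition subgroupF (H : (R -> R) -> Prop) : Prop :=
  (forall f, H f -> inF f) /\
  H (fun x => x) /\
  (forall f g, H f -> H g -> H (fun x => f (g x))) /\
  (forall f, H f -> exists g, H g /\ forall x, g (f x) = x /\ f (g x) = x).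

Definition has_branches (h : R -> R) (u v : word) : Prop :=
  forall alpha : nat -> bool, h (binval (prefix_word u alpha)) = binval (prefix_word v alpha).

Definition simH (H : (R -> R) -> Prop) (u v : word) : Prop :=
  exists h, H h /\ has_branches h u v.

Definition Cl (H : (R -> R) -> Prop) (f : R -> R) : Prop :=
  inF f /\
  exists (k : nat) (p : nat -> R),
    p 0%nat = 0 /\ p k = 1 /\
    (forall i, (i < k)%nat -> p i < p (S i)) /\
    (forall i, (i < k)%nat ->
       exists h, H h /\ forall x, p i <= x <= p (S i) -> f x = h x).

Definition closedF (H : (R -> R) -> Prop) : Prop :=
  forall f, H f <-> Cl H f.

(* Conditions (a)-(f) defining K_{m,n}, with d = gcd(m,n) *)
Definition K_conditions (m n : nat) (K : (R -> R) -> Prop) : Prop :=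
  let d := Nat.gcd m n in
  (forall k : nat, simH K (zeros k ++ [true]) (zeros (k + d) ++ [true])) /\
  (forall k : nat, simH K (ones k ++ [false]) (ones (k + d) ++ [false])) /\
  (forall k : nat, (1 <= k <= d)%nat ->
     simH K (zeros k ++ [true]) (ones (d + 1 - k) ++ [false])) /\
  (forall k : nat, (1 <= k <= n)%nat ->
     simH K (zeros (2 * k) ++ [true; false]) (ones (1 + 3 * (n - k)) ++ [false])) /\
  (forall k : nat, (1 <= k <= n)%nat ->
     simH K (zeros (2 * k) ++ [true; true]) (ones (2 + 3 * (n - k)) ++ [false])) /\
  (forall k : nat, (1 <= k <= n)%nat ->
     simH K (zeros (2 * k - 1) ++ [true]) (ones (3 * (n - k + 1)) ++ [false])).

(* K_{m,n}: the minimal closed subgroup satisfying (a)-(f), i.e. the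
   intersection of all closed subgroups of F satisfying them. *)
Definition K_mn (m n : nat) : (R -> R) -> Prop :=
  fun f => forall K, subgroupF K -> closedF K -> K_conditions m n K -> K f.

(* Main.v *)
Require Import Defs.
From Stdlib Require Import Reals Arith Lia List.
Import ListNotations.

Section S.
Variable K : (R -> R) -> Prop.
Hypothesis HK : subgroupF K.

Lemma sim_refl u : simH K u u.
Proof. destruct HK as [_ [Hid _]]. exists (fun x => x); split; auto. intro; reflexivity. Qed.

Lemma sim_sym u v : simH K u v -> simH K v u.
Proof.
  intros [h [Hh Hb]]. destruct HK as [_ [_ [_ Hinv]]].
  destruct (Hinv h Hh) as [g [Hg Hgi]]. exists g; split; auto.
  intro a. rewrite <- Hb. apply Hgi.
Qed.

Lemma sim_trans u v w : simH K u v -> simH K v w -> simH K u w.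
Proof.
  intros [h [Hh Hb]] [g [Hg Hb2]]. destruct HK as [_ [_ [Hc _]]].
  exists (fun x => g (h x)); split; auto.
  intro a. rewrite Hb. apply Hb2.
Qed.

Lemma sim_iter (P : nat -> word) d :
  (forall k, simH K (P k) (P (k + d)%nat)) ->
  forall j k, simH K (P k) (P (k + j * d)%nat).
Proof.
  intros H j. induction j as [|j IH]; intro k.
  - replace (k + 0 * d)%nat with k by lia. apply sim_refl.
  - apply sim_trans with (P (k + j * d)%nat); auto.
    replace (k + S j * d)%nat with (k + j * d + d)%nat by lia. apply H.
Qed.
End S.

Theorem lemma3p4 (m n : nat) :
  forall f : R -> R, K_mn n n f -> K_mn m n f.
Proof.
  intros f Hf K HK HC Hcond. apply Hf; auto.
  unfold K_conditions in *. rewrite Nat.gcd_diag.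
  set (d := Nat.gcd m n) in *.
  destruct Hcond as [Ha [Hb [Hc [Hd [He Hf']]]]].
  destruct (Nat.gcd_divide_r m n) as [q Hq]. fold d in Hq.
  split; [|split; [|split]]; auto.
  - intro k. rewrite Hq.
    exact (sim_iter K HK (fun k => zeros k ++ [true]) d Ha q k).
  - intro k. rewrite Hq.
    exact (sim_iter K HK (fun k => ones k ++ [false]) d Hb q k).
  - intros k Hk.
    assert (Hd0 : d <> 0%nat) by (intro E; rewrite E in Hq; lia).
    set (j := ((k - 1) / d)%nat). set (r := ((k - 1) mod d)%nat).
    assert (Hkr : (k - 1 = d * j + r)%nat) by (apply Nat.div_mod; auto).
    assert (Hr : (r < d)%nat) by (apply Nat.mod_upper_bound; auto).
    assert (Hjq : (j + 1 <= q)%nat) by nia.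
    apply sim_trans with (zeros (r + 1) ++ [true]); auto.
    { apply sim_sym; auto.
      replace k with (r + 1 + j * d)%nat by lia.
      exact (sim_iter K HK (fun k => zeros k ++ [true]) d Ha j (r + 1)). }
    apply sim_trans with (ones (d + 1 - (r + 1)) ++ [false]); auto.
    { apply Hc. lia. }
    replace (n + 1 - k)%nat with (d + 1 - (r + 1) + (q - 1 - j) * d)%nat by nia.
    exact (sim_iter K HK (fun k => ones k ++ [false]) d Hb (q - 1 - j) _).
Qed.
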